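(* Let $k$ be an algebraically closed field, $\beta$ a basis set of $n$ monomials in $k[x_1,\dots,x_r]$, $R$ the coordinate ring of $U_\beta$ and $M\subseteq R$ the maximal ideal of the point $t_\beta$. Let $S$ be a finite set of $d$ arrows $c^{\mathbf d}_{\mathbf j}$ for $\beta$. Then the $k$-span of (the images of) $S$ in $M/M^2$ has dimension $d$ if and only if both of the following hold: (a) $c^{\mathbf d}_{\mathbf j}\not\sim 0$ for every $c^{\mathbf d}_{\mathbf j}\in S$; (b) $c^{\mathbf d_1}_{\mathbf j_1}\not\sim c^{\mathbf d_2}_{\mathbf j_2}$ for all distinct $c^{\mathbf d_1}_{\mathbf j_1}\neq c^{\mathbf d_2}_{\mathbf j_2}$ in $S$.
   Context: Monomials $\mathbf x^{\mathbf d}=x_1^{d_1}\cdots x_r^{d_r}$ are identified with exponent vectors $\mathbf d\in\mathbb Z_{\ge0}^r$. A basis set is a finite nonempty set $\beta$ of monomials such that $m_1\in\beta$, $m_2\mid m_1$ implies $m_2\in\beta$; $I_\beta$ is the ideal generated by all monomials not in $\beta$ (colength $n=|\beta|$). $\mathbf H^n$ is the Hilbert scheme of $n$ points of $\mathbb A^r_k$, $t_\beta$ the point corresponding to $I_\beta$, and $U_\beta\subseteq\mathbf H^n$ the open affine subscheme of points $t$ for which $\beta$ is a $k$-basis of $k[\mathbf x]/I_t$, with coordinate ring $R$. For $\mathbf x^{\mathbf d}\notin\beta$, $\mathbf x^{\mathbf j}\in\beta$, $c^{\mathbf d}_{\mathbf j}\in R$ is the function with $\mathbf x^{\mathbf d}-\sum_{\mathbf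 j\in\beta}c^{\mathbf d}_{\mathbf j}(t)\mathbf x^{\mathbf j}\in I_t$ for all $t\in U_\beta$; $M$ is the maximal ideal of $t_\beta$ (generated by these functions). An arrow is such a pair $(\mathbf d,\mathbf j)$ (tail $\mathbf x^{\mathbf d}\notin\beta$, head $\mathbf x^{\mathbf j}\in\beta$), denoted and identified with $c^{\mathbf d}_{\mathbf j}$. A translation step replaces $(\mathbf d,\mathbf j)$ by $(\mathbf d\pm e_i,\mathbf j\pm e_i)$ for some $i$, provided the result is again an arrow (nonnegative exponents, head in $\beta$, tail not in $\beta$); two arrows are translation-equivalent ($\sim$) if one is reachable from the other by finitely many steps. We write $c\sim0$ if $c$ is translation-equivalent to an arrow $(\mathbf d',\mathbf j')$ such that for some $i$: $j'_i=0$, $d'_i\ge1$ and $\mathbf x^{\mathbf d'-e_i}\notin\beta$ (i.e. one more step in the decreasing $x_i$-direction would move the head out of the first orthant while the tail stays outside $\beta$). *)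

(* Defs.v *)
From HB Require Import structures.
From mathcomp Require Import all_boot all_order all_algebra.
From mathcomp Require Import finmap.
From mathcomp Require Import mpoly.
From Stdlib Require Import Relations.


Unset Strict Implicit.
Unset Printing Implicit Defensive.

Import GRing.Theory.
Local Open Scope fset_scope.
Local Open Scope ring_scope.

(* Exponent vectors d in Z_{>=0}^r, i.e. monomials x^d of k[x_1..x_r]. *)
Definition mon (r : nat) := {ffun 'I_r -> nat}.

Definition madd {r : nat} (d : mon r) (i : 'I_r) : mon r :=
  [ffun l => (d l + (l == i))%N].
(* d - e_i (only used when d_i >= 1) *)
Definition msub {r : nat} (d : mon r) (i : 'I_r) : mon r :=
  [ffun l => (d l - (l == i))%N].
Definition mzero r : mon r := [ffun _ => 0%N].

Definition basis_set {r : nat} (B : {fset mon r}) : Prop :=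
  B != fset0 /\
  forall m1 m2 : mon r, m1 \in B -> (forall i, (m2 i <= m1 i)%N) -> m2 \in B.

Definition arrow {r : nat} (B : {fset mon r}) (a : mon r * mon r) : bool :=
  (a.1 \notin B) && (a.2 \in B).

Definition border {r : nat} (B : {fset mon r}) : seq (mon r) :=
  undup [seq d <- [seq madd b i | b <- enum_fset B, i <- enum 'I_r] | d \notin B].

(* Variables c^d_j of the ambient polynomial ring: d in the border, j in beta. *)
Definition vars {r : nat} (B : {fset mon r}) : seq (mon r * mon r) :=
  [seq (d, j) | d <- border B, j <- enum_fset B].

Definition nvars {r : nat} (B : {fset mon r}) : nat := size (vars B).

Definition Pring (k : fieldType) {r : nat} (B : {fset mon r}) := {mpoly k[nvars B]}.

Definition varP (k : fieldType) {r : nat} (B : {fset mon r}) (x : mon r * mon r)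
  : Pring k B :=
  match insub (index x (vars B)) with
  | Some i => 'X_i
  | None => 0
  end.

(* Coefficient of x^j in x_i * x^b in k[x]/I_t (for b, j in beta):
   the matrix entry of multiplication by x_i, as a function on U_beta. *)
Definition mulcoef (k : fieldType) {r : nat} (B : {fset mon r}) (i : 'I_r) (b j : mon r)
  : Pring k B :=
  if madd b i \in B then ((madd b i == j)%:R) else varP k B (madd b i, j).

Definition mulx (k : fieldType) {r : nat} (B : {fset mon r}) (i : 'I_r)
  (v : mon r -> Pring k B) : mon r -> Pring k B :=
  fun j => \sum_(b <- enum_fset B) v b * mulcoef k B i b j.

Definition unitv (k : fieldType) {r : nat} (B : {fset mon r}) (u : mon r)
  : mon r -> Pring k B := fun j => ((j == u)%:R).

(* Generators of the ideal I defining U_beta: entries of the commutators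
   [X_a, X_b] of the multiplication matrices. *)
Definition commgen (k : fieldType) {r : nat} (B : {fset mon r}) (a b : 'I_r) (u j : mon r)
  : Pring k B :=
  mulx k B a (mulx k B b (unitv k B u)) j - mulx k B b (mulx k B a (unitv k B u)) j.

(* Normal form of x^d: coordinates of x^d mod I_t in the basis beta,
   computed as X_1^{d_1} ... X_r^{d_r} applied to 1 = x^0. *)
Definition nform (k : fieldType) {r : nat} (B : {fset mon r}) (d : mon r)
  : mon r -> Pring k B :=
  foldr (fun l v => iter (d l) (mulx k B l) v) (unitv k B (mzero r)) (enum 'I_r).

(* The function c^d_j (represented in the ambient polynomial ring). *)
Definition cfun (k : fieldType) {r : nat} (B : {fset mon r}) (a : mon r * mon r)
  : Pring k B := nform k B a.1 a.2.

(* f lies in m^2 + I, where m = (all variables) is the ideal of t_beta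
   (all c^d_j = 0) in the ambient ring; i.e. the image of f in R lies in M^2. *)
Definition in_M2 (k : fieldType) {r : nat} (B : {fset mon r}) (f : Pring k B) : Prop :=
  exists (g : 'I_r -> 'I_r -> mon r -> mon r -> Pring k B)
         (q : 'I_(nvars B) -> 'I_(nvars B) -> Pring k B),
    f = \sum_(a < r) \sum_(b < r) \sum_(u <- enum_fset B) \sum_(j <- enum_fset B)
            g a b u j * commgen k B a b u j
        + \sum_(i < nvars B) \sum_(l < nvars B) q i l * 'X_i * 'X_l.

(* The images of the arrows in S are k-linearly independent in M/M^2,
   i.e. their k-span in M/M^2 has dimension #|S|. *)
Definition indep_cotangent (k : fieldType) {r : nat} (B : {fset mon r})
  (S : {fset mon r * mon r}) : Prop :=
  forall a : mon r * mon r -> k,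
    in_M2 k B (\sum_(s <- enum_fset S) a s *: cfun k B s) ->
    forall s, s \in S -> a s = 0.

Definition tstep {r : nat} (B : {fset mon r}) (a b : mon r * mon r) : Prop :=
  arrow B a /\ arrow B b /\
  exists i : 'I_r,
    (b.1 = madd a.1 i /\ b.2 = madd a.2 i) \/
    (a.1 = madd b.1 i /\ a.2 = madd b.2 i).

Definition tequiv {r : nat} (B : {fset mon r}) : relation (mon r * mon r) :=
  clos_refl_trans (mon r * mon r) (tstep B).

Definition sim0 {r : nat} (B : {fset mon r}) (a : mon r * mon r) : Prop :=
  exists a' : mon r * mon r, tequiv B a a' /\
    exists i : 'I_r, a'.2 i = 0%N /\ (1 <= a'.1 i)%N /\ msub a'.1 i \notin B.

(* Main.v *)
Require Import Defs.
From HB Require Import structures.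
From mathcomp Require Import all_boot all_order all_algebra.
From mathcomp Require Import finmap.
From mathcomp Require Import mpoly.
From Stdlib Require Import Relations ClassicalEpsilon.

Set Implicit Arguments.
Unset Strict Implicit.
Unset Printing Implicit Defensive.
Import GRing.Theory.
Local Open Scope fset_scope.
Local Open Scope ring_scope.

Lemma sum_pick (T : eqType) (V : nmodType) (s : seq T) y (G : T -> V) :
  uniq s -> y \in s -> \sum_(x <- s) (if x == y then G x else 0) = G y.
Proof.
elim: s => //= a s IH /andP[an us]; rewrite inE big_cons => /predU1P[->|ys].
  rewrite eqxx big1_seq ?addr0 // => x /andP[_ xs]; case: eqP => // xy.
  by move: an; rewrite -xy xs.
have ay : a != y by apply/eqP => ay; move: an; rewrite ay ys.
by rewrite (negbTE ay) add0r IH.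
Qed.

Lemma sum_pick_ord (V : nmodType) n (y : 'I_n) (G : 'I_n -> V) :
  \sum_(x < n) (if x == y then G x else 0) = G y.
Proof. by rewrite sum_pick ?index_enum_uniq // mem_index_enum. Qed.

Section Basics.
Variables (r : nat) (B : {fset mon r}).
Hypothesis hB : basis_set B.

Lemma madd_ge (m : mon r) i l : (m l <= madd m i l)%N.
Proof. by rewrite ffunE leq_addr. Qed.

Lemma madd_notin (m : mon r) i : m \notin B -> madd m i \notin B.
Proof.
move=> mB; apply/negP => H; case: hB => _ cl.
by move: mB; rewrite (cl _ _ H (madd_ge m i)).
Qed.

Lemma msub_in (j : mon r) i : j \in B -> msub j i \in B.
Proof.
move=> jB; case: hB => _ cl; apply: (cl _ _ jB) => l.
by rewrite ffunE leq_subr.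
Qed.

Lemma mzero_in : mzero r \in B.
Proof.
case: hB => ne cl; have [m mB] : exists m, m \in B.
  by case/fset0Pn: ne => x xB; exists x.
by apply: (cl _ _ mB) => l; rewrite ffunE.
Qed.

Lemma maddK (m : mon r) i : msub (madd m i) i = m.
Proof. by apply/ffunP => l; rewrite !ffunE addnK. Qed.

Lemma msubK (m : mon r) i : (0 < m i)%N -> madd (msub m i) i = m.
Proof.
move=> h; apply/ffunP => l; rewrite !ffunE; case: eqP => [->|_].
  by rewrite subn1 addn1 prednK.
by rewrite subn0 addn0.
Qed.

Lemma madd_comm (m : mon r) i l : madd (madd m i) l = madd (madd m l) i.
Proof. by apply/ffunP => x; rewrite !ffunE addnAC. Qed.

Lemma madd_i (m : mon r) i : madd m i i = (m i).+1.
Proof. by rewrite ffunE eqxx addn1. Qed.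

Lemma sum_shift (V : nmodType) (F : mon r -> V) (j : mon r) i : j \in B ->
  \sum_(b <- enum_fset B) (if madd b i == j then F b else 0)
  = if (0 < j i)%N then F (msub j i) else 0.
Proof.
move=> jB; case: ifP => ji.
  rewrite -(sum_pick F (fset_uniq B) (msub_in i jB)).
  apply: eq_bigr => b _; congr (if _ then _ else _).
  apply/eqP/eqP => [<-|->]; [by rewrite maddK | by rewrite msubK].
rewrite big1 // => b _; case: eqP => // E; move: ji; rewrite -E madd_i //.
Qed.

End Basics.


Lemma coef1M (k : nzRingType) (p q : {poly k}) : (p * q)`_1 = p`_0 * q`_1 + p`_1 * q`_0.
Proof. by rewrite coefM big_ord_recr big_ord_recr big_ord0 /= add0r. Qed.

Section Vars.
Variables (r : nat) (B : {fset mon r}).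
Hypothesis hB : basis_set B.

Lemma mem_border (b : mon r) i : b \in B -> madd b i \notin B -> madd b i \in border B.
Proof.
move=> bB nB; rewrite /border mem_undup mem_filter nB /=.
by apply/allpairsP; exists (b, i); rewrite /= mem_enum; split.
Qed.

Lemma mem_vars (d j : mon r) : d \in border B -> j \in B -> (d, j) \in vars B.
Proof. by move=> dB jB; apply/allpairsP; exists (d, j). Qed.

Lemma varPE (k : fieldType) (x : mon r * mon r) (h : x \in vars B) :
  exists i : 'I_(nvars B), varP k B x = 'X_i /\ nth (mzero r, mzero r) (vars B) i = x.
Proof.
have lt : (index x (vars B) < nvars B)%N by rewrite /nvars index_mem.
exists (Ordinal lt); rewrite /varP insubT /= nth_index //; split => //.
Qed.

Lemma varP_out (k : fieldType) (x : mon r * mon r) : x \notin vars B -> varP k B x = 0.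
Proof.
move=> h; rewrite /varP insubF //; apply/negbTE; rewrite -leqNgt /nvars.
by rewrite leq_eqVlt (memNindex h) eqxx.
Qed.

End Vars.

Section Forward.
Variables (k : fieldType) (r : nat) (B : {fset mon r}).
Hypothesis hB : basis_set B.
Variable phi : mon r * mon r -> k.
Hypothesis Hphi0 : forall t, ~~ arrow B t -> phi t = 0.
Hypothesis Hphit : forall (m : mon r) l (j : mon r), m \notin B -> j \in B ->
  phi (madd m l, j) = if (0 < j l)%N then phi (m, msub j l) else 0.

Definition hphi (i : 'I_(nvars B)) : {poly k} :=
  (phi (nth (mzero r, mzero r) (vars B) i))%:P * 'X.

Definition E (f : Pring k B) : {poly k} := mmap (@polyC k) hphi f.

Lemma E_B f g : E (f - g) = E f - E g. Proof. by rewrite /E raddfB. Qed.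
Lemma E_D f g : E (f + g) = E f + E g. Proof. by rewrite /E raddfD. Qed.
Lemma E_M f g : E (f * g) = E f * E g. Proof. by rewrite /E rmorphM. Qed.
Lemma E_sum (I : Type) (s : seq I) (F : I -> Pring k B) :
  E (\sum_(i <- s) F i) = \sum_(i <- s) E (F i). Proof. by rewrite /E raddf_sum. Qed.
Lemma E_nat n : E n%:R = n%:R. Proof. by rewrite /E rmorph_nat. Qed.
Lemma E_Z c f : E (c *: f) = c%:P * E f. Proof. by rewrite /E mmapZ. Qed.
Lemma E_X i : E 'X_i = hphi i. Proof. by rewrite /E mmapX mmap1U. Qed.


Definition good (m : mon r) (v : mon r -> Pring k B) :=
  forall j, j \in B -> (E (v j))`_0 = (m == j)%:R /\ (E (v j))`_1 = phi (m, j).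

Lemma coef_nat (n : nat) i : (n%:R : {poly k})`_i = if i == 0%N then n%:R else 0.
Proof. by rewrite -polyC_natr coefC. Qed.

Lemma mulcoef_good l (b j : mon r) : b \in B -> j \in B ->
  (E (mulcoef k B l b j))`_0 = (madd b l == j)%:R /\
  (E (mulcoef k B l b j))`_1 = phi (madd b l, j).
Proof.
move=> bB jB; rewrite /mulcoef; case: ifP => hin.
  rewrite E_nat !coef_nat /=; split => //.
  by rewrite Hphi0 // /arrow hin.
have [i [-> hi]] := varPE k (mem_vars (@mem_border _ _ _ l bB (negbT hin)) jB).
rewrite E_X /hphi hi !coefMX /= !coefC /=; split => //.
by case: eqP => // E1; move: hin; rewrite E1 jB.
Qed.

Lemma good_mulx (m : mon r) l v : good m v -> good (madd m l) (mulx k B l v).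
Proof.
move=> gv j jB; rewrite /mulx E_sum !coef_sum.
have h0 : forall b, b \in enum_fset B ->
    (E (v b * mulcoef k B l b j))`_0 = if m == b then (madd b l == j)%:R else 0.
  move=> b bB; have [g0 _] := gv b bB; have [c0 _] := mulcoef_good l bB jB.
  by rewrite E_M coef0M g0 c0; case: eqP; rewrite ?mul1r ?mul0r.
have h1 : forall b, b \in enum_fset B ->
    (E (v b * mulcoef k B l b j))`_1 = (if m == b then phi (madd b l, j) else 0)
      + (if madd b l == j then phi (m, b) else 0).
  move=> b bB; have [g0 g1] := gv b bB; have [c0 c1] := mulcoef_good l bB jB.
  rewrite E_M coef1M g0 g1 c0 c1; congr (_ + _).
    by case: eqP; rewrite ?mul1r ?mul0r.
  by case: eqP; rewrite ?mulr1 ?mulr0.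
rewrite (eq_big_seq _ h0) (eq_big_seq _ h1) big_split /=.
rewrite (sum_shift hB (fun b => phi (m, b)) l jB).
have Hs : forall (V : nmodType) (F : mon r -> V),
   \sum_(b <- enum_fset B) (if m == b then F b else 0) = if m \in B then F m else 0.
  move=> V F; case: ifP => mB.
    by rewrite -(sum_pick F (fset_uniq B) mB); apply: eq_bigr => b _; rewrite eq_sym.
  rewrite big1_seq // => b /andP[_ bB]; case: eqP => // mb.
  by move: mB; rewrite mb bB.
rewrite Hs (Hs _ (fun b => phi (madd b l, j))); case: ifP => mB; split.
- by [].
- rewrite [X in _ + X = _](_ : _ = 0) ?addr0 //; case: ifP => // _.
  by apply: Hphi0; rewrite /arrow mB.
- case: eqP => // E1; have := madd_notin hB l (negbT mB); by rewrite E1 jB.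
- by rewrite add0r Hphit // mB.
Qed.

Lemma good_iter m l n v : good m v ->
  good (iter n (fun x => madd x l) m) (iter n (mulx k B l) v).
Proof. by elim: n => //= n IH gv; apply: good_mulx; apply: IH. Qed.

Definition mfold (d : mon r) (s : seq 'I_r) :=
  foldr (fun l m => iter (d l) (fun x => madd x l) m) (mzero r) s.

Lemma mfoldE d s x : mfold d s x = (count_mem x s * d x)%N.
Proof.
elim: s => [|l s IH] /=; first by rewrite ffunE.
have itE : forall n (m : mon r), iter n (fun y => madd y l) m x = (m x + n * (x == l))%N.
  elim=> [|n IHn] m /=; first by rewrite mul0n addn0.
  by rewrite ffunE IHn mulSn addnAC addnA.
rewrite itE IH eq_sym; case: eqP => [->|_] /=.
  by rewrite muln1 mulSn addnC.
by rewrite muln0 addn0 add0n.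
Qed.

Lemma mfold_enum d : mfold d (enum 'I_r) = d.
Proof.
by apply/ffunP => x; rewrite mfoldE count_uniq_mem ?enum_uniq // mem_enum mul1n.
Qed.

Lemma good_unitv u : u \in B -> good u (unitv k B u).
Proof.
move=> uB j jB; rewrite /unitv E_nat !coef_nat /= eq_sym; split => //.
by rewrite Hphi0 // /arrow uB.
Qed.

Lemma good_nform d : good d (nform k B d).
Proof.
rewrite -{1}(mfold_enum d) /nform /mfold.
elim: (enum 'I_r) => [|l s IH] /=; first exact: good_unitv (mzero_in hB).
exact: good_iter.
Qed.

Lemma good_commgen a b (u j : mon r) : u \in B -> j \in B ->
  (E (commgen k B a b u j))`_0 = 0 /\ (E (commgen k B a b u j))`_1 = 0.
Proof.
move=> uB jB; rewrite /commgen E_B !coefB.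
have g1 := good_mulx a (good_mulx b (good_unitv uB)) jB.
have g2 := good_mulx b (good_mulx a (good_unitv uB)) jB.
by rewrite madd_comm in g1; case: g1 => -> ->; case: g2 => -> ->; rewrite !subrr.
Qed.


Lemma in_M2_E1 f : in_M2 k B f -> (E f)`_1 = 0.
Proof.
case=> g [q ->]; rewrite E_D coefD !E_sum !coef_sum.
have h0 : forall i, (hphi i)`_0 = 0 by move=> i; rewrite /hphi coefMX.
rewrite big1 ?add0r => [|a _]; last first.
  rewrite E_sum coef_sum big1 // => b _; rewrite E_sum coef_sum big1_seq //.
  move=> u /andP[_ uB]; rewrite E_sum coef_sum big1_seq // => j /andP[_ jB].
  by have [c0 c1] := good_commgen a b uB jB; rewrite E_M coef1M c0 c1 !mulr0 addr0.
rewrite big1 // => i _; rewrite E_sum coef_sum big1 // => l _.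
by rewrite !E_M !E_X coef1M coef0M !h0 !mulr0 mul0r add0r.
Qed.

Lemma E1_cfun (t : mon r * mon r) : t.2 \in B -> (E (cfun k B t))`_1 = phi t.
Proof. by case: t => d j /= jB; have [_ ->] := good_nform d jB. Qed.

End Forward.

Lemma tstep_sym r (B : {fset mon r}) a b : tstep B a b -> tstep B b a.
Proof. by case=> ha [hb [i [[h1 h2]|[h1 h2]]]]; split=> //; split=> //; exists i; [right|left]. Qed.

Lemma tequiv_sym r (B : {fset mon r}) a b : tequiv B a b -> tequiv B b a.
Proof.
elim=> [x y h|x|x y z _ h1 _ h2]; first by apply: rt_step; apply: tstep_sym.
  exact: rt_refl.
exact: rt_trans h2 h1.
Qed.

Lemma tequiv_arrow r (B : {fset mon r}) a b : tequiv B a b -> arrow B a -> arrow B b.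
Proof. by elim=> [x y [_ [h _]]|x|x y z _ h1 _ h2] // /h1 /h2. Qed.

Definition ind (k : nzRingType) (P : Prop) : k :=
  if excluded_middle_informative P then 1 else 0.
Lemma indT (k : nzRingType) (P : Prop) : P -> ind k P = 1.
Proof. by rewrite /ind; case: excluded_middle_informative. Qed.
Lemma indF (k : nzRingType) (P : Prop) : ~ P -> ind k P = 0.
Proof. by rewrite /ind; case: excluded_middle_informative. Qed.

Section ForwardMain.
Variables (k : fieldType) (r : nat) (B : {fset mon r}) (S : {fset mon r * mon r}).
Hypothesis hB : basis_set B.
Hypothesis hS : forall s, s \in S -> arrow B s.
Hypothesis ha : forall s, s \in S -> ~ sim0 B s.
Hypothesis hb : forall s1 s2, s1 \in S -> s2 \in S -> s1 <> s2 -> ~ tequiv B s1 s2.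

Lemma forward : indep_cotangent k B S.
Proof.
move=> a hM s sS.
pose phi t : k := ind k (arrow B t /\ tequiv B s t).
have P0 : forall t, ~~ arrow B t -> phi t = 0.
  by move=> t ht; rewrite /phi indF // => -[h _]; rewrite h in ht.
have Pt : forall (m : mon r) l (j : mon r), m \notin B -> j \in B ->
    phi (madd m l, j) = if (0 < j l)%N then phi (m, msub j l) else 0.
  move=> m l j mB jB.
  have ar : arrow B (madd m l, j) by rewrite /arrow /= jB madd_notin.
  case: ifP => jl.
    have ar2 : arrow B (m, msub j l) by rewrite /arrow /= mB msub_in.
    have st : tstep B (m, msub j l) (madd m l, j).
      by split=> //; split=> //; exists l; left; rewrite /= msubK.
    have eqv : (arrow B (madd m l, j) /\ tequiv B s (madd m l, j)) <->
               (arrow B (m, msub j l) /\ tequiv B s (m, msub j l)).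
      split=> -[_ h]; split=> //.
        exact: rt_trans h (rt_step _ _ _ _ (tstep_sym st)).
      exact: rt_trans h (rt_step _ _ _ _ st).
    rewrite /phi; case: (excluded_middle_informative (arrow B (m, msub j l) /\ tequiv B s (m, msub j l))) => h.
      by rewrite !indT //; apply/eqv.
    by rewrite !indF // => /eqv.
  rewrite /phi indF // => -[_ h].
  apply: (ha sS); exists (madd m l, j); split=> //; exists l.
  rewrite /= madd_i maddK; split; first by move: jl; case: (j l).
  by split.
have := in_M2_E1 hB P0 Pt hM.
rewrite E_sum coef_sum.
have H : forall t, t \in enum_fset S ->
    (E phi (a t *: cfun k B t))`_1 = if t == s then a t else 0.
  move=> t tS; rewrite E_Z coefCM E1_cfun //; last by case/andP: (hS tS).
  case: eqP => [->|ne].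
    by rewrite /phi indT ?mulr1 //; split; [exact: hS|exact: rt_refl].
  rewrite /phi indF ?mulr0 // => -[_ h].
  by apply: (hb sS tS) h => ts; apply: ne.
by rewrite (eq_big_seq _ H) (sum_pick a (fset_uniq S) sS).
Qed.

End ForwardMain.


Lemma sum_only (T : eqType) (V : nmodType) (s : seq T) y (F : T -> V) :
  uniq s -> y \in s -> (forall x, x \in s -> x != y -> F x = 0) ->
  \sum_(x <- s) F x = F y.
Proof.
move=> us ys h; rewrite -(sum_pick F us ys); apply: eq_big_seq => x xs.
by case: eqP => // /eqP ne; apply: h.
Qed.

Section Ideal.
Variables (k : fieldType) (r : nat) (B : {fset mon r}).
Local Notation P := (Pring k B).
Local Notation J := (in_M2 k B).

Lemma J0 : J 0.
Proof.
exists (fun _ _ _ _ => 0), (fun _ _ => 0).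
rewrite [X in X + _]big1 ?add0r => [|a _].
  by rewrite big1 // => i _; rewrite big1 // => l _; rewrite !mul0r.
rewrite big1 // => b _; rewrite big1 // => u _; rewrite big1 // => j _.
by rewrite mul0r.
Qed.

Lemma JD f g : J f -> J g -> J (f + g).
Proof.
case=> g1 [q1 ->] [g2 [q2 ->]].
exists (fun a b u j => g1 a b u j + g2 a b u j), (fun i l => q1 i l + q2 i l).
rewrite addrACA; congr (_ + _).
  rewrite -big_split; apply: eq_bigr => a _; rewrite -big_split; apply: eq_bigr => b _.
  rewrite -big_split; apply: eq_bigr => u _; rewrite -big_split; apply: eq_bigr => j _.
  by rewrite mulrDl.
rewrite -big_split; apply: eq_bigr => i _; rewrite -big_split; apply: eq_bigr => l _.
by rewrite !mulrDl.
Qed.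

Lemma JM h f : J f -> J (h * f).
Proof.
case=> g [q ->].
exists (fun a b u j => h * g a b u j), (fun i l => h * q i l).
rewrite mulrDr; congr (_ + _).
  rewrite mulr_sumr; apply: eq_bigr => a _; rewrite mulr_sumr; apply: eq_bigr => b _.
  rewrite mulr_sumr; apply: eq_bigr => u _; rewrite mulr_sumr; apply: eq_bigr => j _.
  by rewrite mulrA.
rewrite mulr_sumr; apply: eq_bigr => i _; rewrite mulr_sumr; apply: eq_bigr => l _.
by rewrite !mulrA.
Qed.

Lemma JN f : J f -> J (- f).
Proof. by move=> h; rewrite -mulN1r; apply: JM. Qed.

Lemma JB f g : J f -> J g -> J (f - g).
Proof. by move=> hf hg; apply: JD => //; apply: JN. Qed.

Lemma Jsum (I : Type) (s : seq I) (F : I -> P) : (forall i, J (F i)) -> J (\sum_(i <- s) F i).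
Proof.
move=> h; elim: s => [|x s IH]; first by rewrite big_nil; exact: J0.
by rewrite big_cons; apply: JD.
Qed.

Lemma Jsum_cond (I : Type) (s : seq I) (Pr : pred I) (F : I -> P) :
  (forall i, Pr i -> J (F i)) -> J (\sum_(i <- s | Pr i) F i).
Proof.
move=> h; rewrite big_mkcond; apply: Jsum => i; case: ifP => [/h //|_]; exact: J0.
Qed.

Lemma Jsum_seq (I : eqType) (s : seq I) (F : I -> P) :
  (forall i, i \in s -> J (F i)) -> J (\sum_(i <- s) F i).
Proof. by move=> h; rewrite big_seq; apply: Jsum_cond. Qed.


Lemma sumG0 :
  \sum_(a < r) \sum_(b < r) \sum_(u <- enum_fset B) \sum_(j <- enum_fset B)
     0 * commgen k B a b u j = 0 :> P.
Proof.
rewrite big1 // => a _; rewrite big1 // => b _; rewrite big1 // => u _.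
by rewrite big1 // => j _; rewrite mul0r.
Qed.

Lemma sumQ0 : \sum_(i < nvars B) \sum_(l < nvars B) 0 * 'X_i * 'X_l = 0 :> P.
Proof. by rewrite big1 // => i _; rewrite big1 // => l _; rewrite !mul0r. Qed.

Lemma J_commgen a b (u j : mon r) : u \in B -> j \in B -> J (commgen k B a b u j).
Proof.
move=> uB jB.
exists (fun a' b' u' j' => if [&& a' == a, b' == b, u' == u & j' == j] then 1 else 0).
exists (fun _ _ => 0); rewrite sumQ0 addr0.
rewrite (sum_only (y:=a)) ?index_enum_uniq ?mem_index_enum // => [|a' _ na]; last first.
  rewrite big1 // => b' _; rewrite big1 // => u' _; rewrite big1 // => j' _.
  by rewrite (negbTE na) mul0r.
rewrite (sum_only (y:=b)) ?index_enum_uniq ?mem_index_enum // => [|b' _ nb]; last first.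
  rewrite big1 // => u' _; rewrite big1 // => j' _.
  by rewrite eqxx (negbTE nb) mul0r.
rewrite (sum_only (y:=u)) ?fset_uniq // => [|u' _ nu]; last first.
  rewrite big1 // => j' _.
  by rewrite !eqxx (negbTE nu) mul0r.
rewrite (sum_only (y:=j)) ?fset_uniq // => [|j' _ nj]; last first.
  by rewrite !eqxx (negbTE nj) mul0r.
by rewrite !eqxx mul1r.
Qed.

Definition inm (f : P) := exists h : 'I_(nvars B) -> P, f = \sum_i h i * 'X_i.

Lemma inm_M2 f g : inm f -> inm g -> J (f * g).
Proof.
case=> hf -> [hg ->]; exists (fun _ _ _ _ => 0), (fun i l => hf i * hg l).
rewrite sumG0 add0r mulr_suml; apply: eq_bigr => i _; rewrite mulr_sumr.
by apply: eq_bigr => l _; rewrite mulrACA mulrA.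
Qed.

Lemma inm_varP x : inm (varP k B x).
Proof.
case xv: (x \in vars B).
  have [i [-> _]] := varPE k xv.
  exists (fun l => if l == i then 1 else 0).
  rewrite (sum_only (y:=i)) ?index_enum_uniq ?mem_index_enum ?eqxx ?mul1r //.
  by move=> l _ /negbTE ->; rewrite mul0r.
rewrite varP_out ?xv //; exists (fun _ => 0); by rewrite big1 // => i _; rewrite mul0r.
Qed.

Definition ev0 (f : P) : k := (E (fun _ : mon r * mon r => 0 : k) f)`_0.

Lemma ev0_X i : ev0 'X_i = 0.
Proof. by rewrite /ev0 E_X /hphi coefMX. Qed.

Lemma decomp (f : P) : exists h : 'I_(nvars B) -> P, f = (ev0 f)%:MP + \sum_i h i * 'X_i.
Proof.
elim/mpolyind: f => [|c m p _ _ [h hp]].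
  exists (fun _ => 0); rewrite big1 => [|i _]; last by rewrite mul0r.
  by rewrite /ev0 /E raddf0 coef0 mpolyC0 addr0.
have evD : ev0 (c *: 'X_[m] + p) = c * ev0 'X_[m] + ev0 p.
  by rewrite /ev0 E_D E_Z coefD coefCM.
case: (boolP [exists i, (0 < m i)%N]) => [/existsP[i mi]|].
  have mE : m = (m - U_(i) + U_(i))%MM.
    apply/mnmP => l; rewrite mnmDE mnmBE mnm1E; case: eqP => [<-|_].
      by rewrite subnK.
    by rewrite subn0 addn0.
  have XE : 'X_[m] = 'X_[m - U_(i)] * 'X_i :> P by rewrite {1}mE mpolyXD.
  have e0 : ev0 'X_[m] = 0.
    by rewrite XE /ev0 E_M coef0M E_X /hphi coefMX mulr0.
  exists (fun l => h l + if l == i then c *: 'X_[m - U_(i)] else 0).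
  rewrite evD e0 mulr0 add0r {1}hp.
  have -> : \sum_l (h l + (if l == i then c *: 'X_[m - U_(i)] else 0)) * 'X_l
      = \sum_l h l * 'X_l + c *: 'X_[m] :> P.
    transitivity (\sum_l (h l * 'X_l + (if l == i then c *: 'X_[m - U_(i)] else 0) * 'X_l)).
      by apply: eq_bigr => l _; rewrite mulrDl.
    rewrite big_split /=; congr (_ + _).
    rewrite (sum_only (y:=i)) ?index_enum_uniq ?mem_index_enum ?eqxx //.
      by rewrite XE scalerAl.
    by move=> l _ /negbTE ->; rewrite mul0r.
  by rewrite addrC addrA.
rewrite negb_exists => /forallP h0.
have m0 : m = 0%MM.
  by apply/mnmP => l; rewrite mnm0E; move: (h0 l); rewrite lt0n negbK => /eqP.
rewrite m0 in evD *.
exists h; rewrite evD mpolyX0 /ev0 /E rmorph1 coef1 /= mulr1 -/(ev0 p).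
by rewrite {1}hp addrA mpolyCD -mul_mpolyC mulr1.
Qed.

End Ideal.


Section Backward.
Variables (k : fieldType) (r : nat) (B : {fset mon r}).
Hypothesis hB : basis_set B.
Local Notation P := (Pring k B).
Local Notation J := (in_M2 k B).

Definition veq (v w : mon r -> P) := forall j, j \in B -> J (v j - w j).

Lemma veq_refl v : veq v v.
Proof. by move=> j _; rewrite subrr; exact: J0. Qed.

Lemma veq_sym v w : veq v w -> veq w v.
Proof. by move=> h j jB; rewrite -opprB; apply: JN; apply: h. Qed.

Lemma veq_trans v w x : veq v w -> veq w x -> veq v x.
Proof.
by move=> h1 h2 j jB; rewrite -(subrKA (w j)); apply: JD; [apply: h1|apply: h2].
Qed.

Lemma mulx_veq l v w : veq v w -> veq (mulx k B l v) (mulx k B l w).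
Proof.
move=> h j jB; rewrite /mulx -sumrB; apply: Jsum_seq => b bB.
by rewrite -mulrBl mulrC; apply: JM; apply: h.
Qed.

Lemma iter_veq l n v w : veq v w -> veq (iter n (mulx k B l) v) (iter n (mulx k B l) w).
Proof. by elim: n => //= n IH h; apply: mulx_veq; apply: IH. Qed.

Lemma mulx2E a b v (j : mon r) :
  mulx k B a (mulx k B b v) j =
  \sum_(u <- enum_fset B) v u *
     (\sum_(b' <- enum_fset B) mulcoef k B b u b' * mulcoef k B a b' j).
Proof.
rewrite /mulx.
under eq_bigr => b' _ do rewrite mulr_suml.
rewrite exchange_big /=; apply: eq_bigr => u _; rewrite mulr_sumr.
by apply: eq_bigr => b' _; rewrite mulrA.
Qed.

Lemma mulx2U a b (u j : mon r) : u \in B ->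
  mulx k B a (mulx k B b (unitv k B u)) j =
  \sum_(b' <- enum_fset B) mulcoef k B b u b' * mulcoef k B a b' j.
Proof.
move=> uB; rewrite mulx2E (sum_only (y:=u)) ?fset_uniq //.
  by rewrite /unitv eqxx mul1r.
by move=> x _ /negbTE; rewrite /unitv => ->; rewrite mul0r.
Qed.

Lemma comm_veq a b v : veq (mulx k B a (mulx k B b v)) (mulx k B b (mulx k B a v)).
Proof.
move=> j jB; rewrite !mulx2E -sumrB; apply: Jsum_seq => u uB.
rewrite -mulrBr; apply: JM; rewrite -!mulx2U //; exact: J_commgen.
Qed.

Lemma comm_iter_veq i l n v :
  veq (mulx k B i (iter n (mulx k B l) v)) (iter n (mulx k B l) (mulx k B i v)).
Proof.
elim: n => [|n IH] /=; first exact: veq_refl.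
apply: veq_trans (comm_veq _ _ _) _; exact: mulx_veq.
Qed.

Definition Ff (d : mon r) (s : seq 'I_r) :=
  foldr (fun l v => iter (d l) (mulx k B l) v) (unitv k B (mzero r)) s.

Lemma Ff_eq (d d' : mon r) s : (forall l, l \in s -> d l = d' l) -> Ff d s = Ff d' s.
Proof.
elim: s => //= l s IH h; rewrite h ?inE ?eqxx // IH // => x xs.
by apply: h; rewrite inE xs orbT.
Qed.

Lemma Ff_step (d : mon r) i s : uniq s -> i \in s -> veq (Ff (madd d i) s) (mulx k B i (Ff d s)).
Proof.
elim: s => //= l s IH /andP[ls us]; rewrite inE => /predU1P[il|iS].
  subst l; rewrite madd_i iterS (@Ff_eq (madd d i) d s); first exact: veq_refl.
  move=> x xs.
  rewrite ffunE; case: eqP => [xi|]; last by rewrite addn0.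
  by move: ls; rewrite -xi xs.
have li : (madd d i) l = d l.
  rewrite ffunE; case: eqP => [li|]; last by rewrite addn0.
  by move: ls; rewrite li iS.
rewrite li; apply: veq_trans (iter_veq _ _ (IH us iS)) _.
exact: veq_sym (comm_iter_veq _ _ _ _).
Qed.

Lemma nform_step (d : mon r) i : veq (nform k B (madd d i)) (mulx k B i (nform k B d)).
Proof. exact: Ff_step (enum_uniq _) (mem_enum _ _). Qed.

Lemma nform_inm (d b : mon r) : d \notin B -> b \in B -> inm (nform k B d b).
Proof.
move=> dB bB; have [h ->] := decomp (nform k B d b).
have P0 : forall t : mon r * mon r, ~~ arrow B t -> (fun _ => 0 : k) t = 0 by [].
have Pt : forall (m : mon r) l (j : mon r), m \notin B -> j \in B ->
    (fun _ => 0 : k) (madd m l, j) = if (0 < j l)%N then (fun _ => 0 : k) (m, msub j l) else 0.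
  by move=> *; case: ifP.
have [e0 _] := good_nform hB P0 Pt d bB.
rewrite /ev0 e0; case: eqP => [db|_]; first by move: dB; rewrite db bB.
by rewrite mpolyC0 add0r; exists h.
Qed.

Lemma L5 (d : mon r) i (j : mon r) : d \notin B -> j \in B ->
  J (mulx k B i (nform k B d) j - (if (0 < j i)%N then nform k B d (msub j i) else 0)).
Proof.
move=> dB jB; rewrite -(sum_shift hB (nform k B d) i jB) /mulx -sumrB.
apply: Jsum_seq => b bB; rewrite /mulcoef; case: ifP => hin.
  by case: eqP => _; rewrite ?mulr1 ?mulr0 subrr; exact: J0.
have -> : (madd b i == j) = false.
  by apply/negbTE; apply/eqP => E1; move: hin; rewrite E1 jB.
rewrite subr0; apply: inm_M2; [exact: nform_inm | exact: inm_varP].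
Qed.

Lemma L6 (d : mon r) i (j : mon r) : d \notin B -> j \in B ->
  J (cfun k B (madd d i, j) - (if (0 < j i)%N then cfun k B (d, msub j i) else 0)).
Proof.
move=> dB jB; rewrite /cfun /=.
rewrite -(subrKA (mulx k B i (nform k B d) j)); apply: JD.
  exact: nform_step.
by have := L5 i dB jB; case: ifP.
Qed.

Lemma tstep_J t t' : tstep B t t' -> J (cfun k B t - cfun k B t').
Proof.
have H : forall t t' i, arrow B t -> arrow B t' -> t'.1 = madd t.1 i -> t'.2 = madd t.2 i ->
    J (cfun k B t' - cfun k B t).
  move=> [d j] [d' j'] i /andP[/= dB jB] /andP[_ /= jB'] /= e1 e2; subst d' j'.
  by have := L6 i dB jB'; rewrite madd_i /= maddK.
case=> ha [hb [i [[h1 h2]|[h1 h2]]]].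
  by rewrite -opprB; apply: JN; apply: H h1 h2.
exact: H h1 h2.
Qed.

Lemma tequiv_J t t' : tequiv B t t' -> J (cfun k B t - cfun k B t').
Proof.
elim=> [x y h|x|x y z _ h1 _ h2]; first exact: tstep_J.
  by rewrite subrr; exact: J0.
by rewrite -(subrKA (cfun k B y)); apply: JD.
Qed.

Lemma sim0_J s : arrow B s -> sim0 B s -> J (cfun k B s).
Proof.
move=> hs [a' [he [i [h2 [h1 h3]]]]].
have aa := tequiv_arrow he hs.
have aB : a'.2 \in B by case/andP: aa.
have := L6 i h3 aB; rewrite msubK // h2 /= subr0.
rewrite -[a'.1]/(a'.1) => h; rewrite -(subrK (cfun k B a') (cfun k B s)).
apply: JD; first exact: tequiv_J.
by case: a' he aa aB h2 h1 h3 h.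
Qed.

End Backward.

Unset Implicit Arguments.
Close Scope ring_scope.

Theorem theorem3p2 (k : closedFieldType) (r : nat) (B : {fset mon r})
  (S : {fset mon r * mon r}) :
  basis_set B ->
  (forall s, s \in S -> arrow B s) ->
  (indep_cotangent k B S <->
   ((forall s, s \in S -> ~ sim0 B s) /\
    (forall s1 s2, s1 \in S -> s2 \in S -> s1 <> s2 -> ~ tequiv B s1 s2))).
Proof.
move=> hB hS; split; last by case=> ha hb; exact: forward.
move=> hI.
have pick : forall s, s \in S ->
    (\sum_(t <- enum_fset S) ((t == s)%:R : k) *: cfun k B t = cfun k B s)%R.
  move=> s sS; rewrite (sum_only (y:=s)) ?fset_uniq // ?eqxx ?GRing.scale1r //.
  by move=> t _ /negbTE ->; rewrite GRing.scale0r.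
split.
  move=> s sS hs0.
  have hM : in_M2 k B (\sum_(t <- enum_fset S) ((t == s)%:R : k) *: cfun k B t)%R.
    by rewrite pick //; apply: sim0_J => //; exact: hS.
  by have := hI _ hM s sS; rewrite eqxx => /eqP; rewrite oner_eq0.
move=> s1 s2 s1S s2S ne he.
have hM : in_M2 k B (\sum_(t <- enum_fset S)
     (((t == s1)%:R - (t == s2)%:R : k) *: cfun k B t))%R.
  under eq_bigr => t _ do rewrite scalerBl.
  rewrite sumrB !pick //; exact: tequiv_J.
have := hI _ hM s1 s1S; rewrite eqxx; case: eqP => [e|_]; first by case: ne.
by move=> /eqP; rewrite subr0 oner_eq0.
Qed.
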